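(* Let $k\ge1$, $n_1,\dots,n_k\ge2$, $n=n_1+\cdots+n_k$, and $C\in\mathbb{S}^{n+1}$. Consider (Spheres-BM): minimize $\langle CY,Y\rangle$ over $Y\in\mathbb{R}^{(n+1)\times p}$ with $Y^\top=(Y_1^\top\ \cdots\ Y_k^\top\ y)$, $Y_i\in\mathbb{R}^{n_i\times p}$, $y\in\mathbb{R}^p$, subject to $\|Y_1\|=\cdots=\|Y_k\|=1$ and $\|y\|=1$; and (Spheres-SDP): minimize $\langle C,X\rangle$ over $X\in\mathbb{S}^{n+1}$ subject to $\operatorname{tr}(X_{11})=\cdots=\operatorname{tr}(X_{kk})=1$, $X_{n+1,n+1}=1$, $X\succeq0$. If $p\ge\max(2,k)$, then every second-order critical point $Y$ of (Spheres-BM) is globally optimal for (Spheres-BM), and $YY^\top$ is globally optimal for (Spheres-SDP).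
   Context: $\langle U,V\rangle=\operatorname{tr}(U^\top V)$, $\|\cdot\|$ Frobenius/Euclidean norm; $\mathbb{S}^{N}$ the real symmetric $N\times N$ matrices. $X_{ii}$ denotes the $n_i\times n_i$ diagonal block of $X$ corresponding to the $i$-th group of coordinates (the first $n$ coordinates are split consecutively into groups of sizes $n_1,\dots,n_k$), and $X_{n+1,n+1}$ its last diagonal entry. Both problems are instances of the general form with constraint matrices $A_i$ ($i=1,\dots,k$) equal to the block-diagonal matrix with $I_{n_i}$ in the $i$-th block and zeros elsewhere, $A_{k+1}=e_{n+1}e_{n+1}^\top$, and all right-hand sides equal to $1$; write $\mathcal{A}(X)_i=\langle A_i,X\rangle$, $\mathcal{A}^*(\nu)=\sum_i\nu_iA_i$. For feasible $Y$: $T_Y=\{\dot Y:\langle A_iY,\dot Y\rangle=0\ \forall i\}$; $G_{ij}=\langle A_iY,A_jY\rangle$; $\mu=G^\dagger\mathcal{A}(CYY^\top)$; $S(Y)=C-\mathcal{A}^*(\mu)$. $Y$ is second-order critical if $S(Y)Y=0$ and $\langle\dot Y,S(Y)\dot Y\rangle\ge0$ for all $\dot Y\in T_Y$. *)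

(* Defs.v *)
From HB Require Import structures.
From mathcomp Require Import all_boot all_order all_algebra.
From mathcomp Require Import reals.
From Stdlib Require Import ClassicalEpsilon.
Set Implicit Arguments. Unset Strict Implicit. Unset Printing Implicit Defensive.
Import Order.TTheory GRing.Theory Num.Theory.
Local Open Scope ring_scope.

Section General.
Variable R : realType.

Definition inner (m q : nat) (U V : 'M[R]_(m, q)) : R := \tr (U^T *m V).

(* Moore-Penrose pseudo-inverse, characterised by the four Penrose equations
   (it always exists and is unique over the reals). *)
Definition penrose (m : nat) (G X : 'M[R]_m) : Prop :=
  [/\ G *m X *m G = G, X *m G *m X = X, (G *m X)^T = G *m X & (X *m G)^T = X *m G].
Definition mpinv (m : nat) (G : 'M[R]_m) : 'M[R]_m :=
  epsilon (inhabits 0) (penrose G).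

Variables (m N : nat) (A : 'I_m -> 'M[R]_N).

Definition Amap (X : 'M[R]_N) : 'cV[R]_m := \col_i inner (A i) X.
Definition Aadj (nu : 'cV[R]_m) : 'M[R]_N := \sum_i nu i 0 *: A i.

Definition bm_feasible (p : nat) (Y : 'M[R]_(N, p)) : Prop :=
  forall i, inner (A i) (Y *m Y^T) = 1.
Definition bm_cost (C : 'M[R]_N) (p : nat) (Y : 'M[R]_(N, p)) : R :=
  inner (C *m Y) Y.
Definition bm_optimal (C : 'M[R]_N) (p : nat) (Y : 'M[R]_(N, p)) : Prop :=
  bm_feasible Y /\
  forall Z : 'M[R]_(N, p), bm_feasible Z -> bm_cost C Y <= bm_cost C Z.

Definition tangent (p : nat) (Y Yd : 'M[R]_(N, p)) : Prop :=
  forall i, inner (A i *m Y) Yd = 0.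
Definition gram (p : nat) (Y : 'M[R]_(N, p)) : 'M[R]_m :=
  \matrix_(i, j) inner (A i *m Y) (A j *m Y).
Definition mult (C : 'M[R]_N) (p : nat) (Y : 'M[R]_(N, p)) : 'cV[R]_m :=
  mpinv (gram Y) *m Amap (C *m Y *m Y^T).
Definition Smat (C : 'M[R]_N) (p : nat) (Y : 'M[R]_(N, p)) : 'M[R]_N :=
  C - Aadj (mult C Y).

Definition second_order_critical (C : 'M[R]_N) (p : nat) (Y : 'M[R]_(N, p)) :
  Prop :=
  [/\ bm_feasible Y, Smat C Y *m Y = 0 &
      forall Yd : 'M[R]_(N, p), tangent Y Yd -> 0 <= inner Yd (Smat C Y *m Yd)].

Definition psd (X : 'M[R]_N) : Prop :=
  X^T = X /\ forall v : 'cV[R]_N, 0 <= (v^T *m X *m v) 0 0.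
Definition sdp_feasible (X : 'M[R]_N) : Prop :=
  X^T = X /\ (forall i, inner (A i) X = 1) /\ psd X.
Definition sdp_optimal (C : 'M[R]_N) (X : 'M[R]_N) : Prop :=
  sdp_feasible X /\
  forall X' : 'M[R]_N, sdp_feasible X' -> inner C X <= inner C X'.

End General.

(* The sphere constraints: coordinates 0..n-1 split consecutively into groups of
   sizes ns 0, ..., ns (k-1), n = sum ns; last coordinate index n.
   Constraint index i : 'I_k.+1; i < k is group i, i = k is the last entry. *)
Section Spheres.
Variable R : realType.
Variables (k : nat) (ns : 'I_k -> nat).

Definition nsum : nat := \sum_(i < k) ns i.
Definition offset (l : 'I_k) : nat := \sum_(j < k | (j < l)%N) ns j.

Definition in_block (i : 'I_k.+1) (a : 'I_nsum.+1) : bool :=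
  [exists l : 'I_k, (val l == val i) && (offset l <= a < offset l + ns l)%N]
  || ((val i == k) && (val a == nsum)).

Definition spheresA (i : 'I_k.+1) : 'M[R]_nsum.+1 :=
  \matrix_(a, b) (if (a == b) && in_block i a then 1 else 0).

End Spheres.

(* Main.v *)
Require Import Defs.
From HB Require Import structures.
From mathcomp Require Import all_boot all_order all_algebra.
From mathcomp Require Import reals.
From mathcomp Require Import ring lra zify.
Set Implicit Arguments. Unset Strict Implicit. Unset Printing Implicit Defensive.
Import Order.TTheory GRing.Theory Num.Theory.
Local Open Scope ring_scope.


Lemma tr11 (R : realFieldType) (A : 'M[R]_1) : \tr A = A 0 0.
Proof. by rewrite /mxtrace big_ord1. Qed.

Lemma trTT (R : realFieldType) n q (X : 'M[R]_(n, q)) :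
  \tr (X^T *m X) = \sum_i \sum_j X j i ^+ 2.
Proof.
rewrite /mxtrace; apply: eq_bigr => i _; rewrite mxE.
by apply: eq_bigr => j _; rewrite mxE expr2.
Qed.

Lemma trTT_ge0 (R : realFieldType) n q (X : 'M[R]_(n, q)) : 0 <= \tr (X^T *m X).
Proof. by rewrite trTT; apply: sumr_ge0 => i _; apply: sumr_ge0 => j _; apply: sqr_ge0. Qed.

Lemma trTT_eq0 (R : realFieldType) n q (X : 'M[R]_(n, q)) : \tr (X^T *m X) = 0 -> X = 0.
Proof.
rewrite trTT => /eqP; rewrite psumr_eq0; last by move=> i _; apply: sumr_ge0 => j _; apply: sqr_ge0.
move=> /allP H; apply/matrixP => j i; rewrite mxE.
have := H i (mem_index_enum i); rewrite implyTb psumr_eq0; last by move=> *; apply: sqr_ge0.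
by move=> /allP /(_ j (mem_index_enum j)); rewrite implyTb sqrf_eq0 => /eqP.
Qed.

Lemma ker_nonzero (R : fieldType) q c (L : 'M[R]_(q, c)) : (c < q)%N ->
  exists x : 'rV[R]_q, x != 0 /\ x *m L = 0.
Proof.
move=> hcq.
have hK : kermx L != 0.
  rewrite -mxrank_eq0 mxrank_ker.
  have := rank_leq_col L; lia.
have [r hr] : exists r, row r (kermx L) != 0.
  apply/existsP; apply: contraR hK => /existsPn H; apply/eqP/row_matrixP => r.
  by rewrite row0; apply/eqP; move: (H r); rewrite negbK.
exists (row r (kermx L)); split => //.
by rewrite -row_mul mulmx_ker row0.
Qed.


Lemma quad_disc (R : realFieldType) (a b c : R) : 0 <= c ->
  (forall t, 0 <= a + 2 * b * t + c * t ^+ 2) -> b ^+ 2 <= a * c.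
Proof.
move=> c0 H; rewrite leNgt; apply/negP => hlt.
case: (ltrgtP c 0) => [|cpos|c00]; first by rewrite ltNge c0.
  have := H (- b / c); set t := - b / c => h.
  have : a + 2 * b * t + c * t ^+ 2 = a - b ^+ 2 / c.
    rewrite /t; field; by rewrite gt_eqF.
  move=> e2; rewrite e2 in h.
  have : b ^+ 2 / c <= a by rewrite -subr_ge0.
  rewrite ler_pdivrMr // => hh; lra.
have bn : b != 0 by apply: contraTN hlt => /eqP ->; rewrite c00 mulr0 expr0n /= ltxx.
have := H (- (a + 1) / (2 * b)); rewrite c00 mul0r addr0.
have -> : 2 * b * (- (a + 1) / (2 * b)) = - (a + 1).
  field; rewrite ?mulf_neq0 // ?pnatr_eq0 // ?bn //=.

lra.
Qed.

Definition qf (R : realFieldType) n (X : 'M[R]_n) (v w : 'cV[R]_n) : R := (v^T *m X *m w) 0 0.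

Lemma qf_sym (R : realFieldType) n (X : 'M[R]_n) v w : X^T = X -> qf X w v = qf X v w.
Proof.
move=> hX; rewrite /qf -[in LHS](trmxK (w^T *m X *m v)) mxE.
by rewrite !trmx_mul trmxK hX mulmxA.
Qed.

Lemma mxD00 (R : realFieldType) (A B : 'M[R]_1) : (A + B) 0 0 = A 0 0 + B 0 0.
Proof. by rewrite mxE. Qed.
Lemma mxZ00 (R : realFieldType) a (A : 'M[R]_1) : (a *: A) 0 0 = a * A 0 0.
Proof. by rewrite mxE. Qed.

Lemma qf_exp (R : realFieldType) n (X : 'M[R]_n) v w t : X^T = X ->
  qf X (v + t *: w) (v + t *: w) = qf X v v + 2 * qf X v w * t + qf X w w * t ^+ 2.
Proof.
move=> hX; rewrite /qf.
have -> : (v + t *: w)^T = v^T + t *: w^T by apply/matrixP => i j; rewrite !mxE.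
rewrite mulmxDl mulmxDl mulmxDr mulmxDr -!scalemxAl -!scalemxAr.
rewrite !mxD00 !mxZ00.
have e := qf_sym v w hX; rewrite /qf in e; rewrite e; ring.
Qed.

Lemma qf_CS (R : realFieldType) n (X : 'M[R]_n) v w : X^T = X ->
  (forall u, 0 <= qf X u u) -> qf X v w ^+ 2 <= qf X v v * qf X w w.
Proof.
move=> hX hP; apply: quad_disc => // t; rewrite -qf_exp //.
Qed.

Lemma mxB00 (R : realFieldType) (A B : 'M[R]_1) : (A - B) 0 0 = A 0 0 - B 0 0.
Proof. by rewrite !mxE. Qed.
Lemma mxM00 (R : realFieldType) (A B : 'M[R]_1) : (A *m B) 0 0 = A 0 0 * B 0 0.
Proof. by rewrite !mxE big_ord1. Qed.

Definition psdq (R : realFieldType) n (X : 'M[R]_n) := forall u, 0 <= qf X u u.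

Lemma qf_delta (R : realFieldType) n (X : 'M[R]_n) a b :
  qf X (delta_mx a 0) (delta_mx b 0) = X a b.
Proof. by rewrite /qf trmx_delta -rowE -colE !mxE. Qed.

Lemma psd_tr_aux (R : realFieldType) n (S : 'M[R]_n) : psdq S -> forall m (X : 'M[R]_n),
  X^T = X -> psdq X -> (forall a b : 'I_n, (m <= a)%N -> X a b = 0) -> 0 <= \tr (S *m X).
Proof.
move=> hS; elim=> [|m IH] X hXs hXp hsupp.
  have -> : X = 0 by apply/matrixP => a b; rewrite mxE hsupp.
  by rewrite mulmx0 /mxtrace big1 // => i _; rewrite mxE.
have Xsym : forall a b, X b a = X a b.
  by move=> a b; rewrite -[in LHS]hXs mxE.
case: (ltnP m n) => [hmn | hnm]; last first.
  apply: IH => // a b hma; have := ltn_ord a; lia.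
pose c := Ordinal hmn.
have hcc : 0 <= X c c by rewrite -qf_delta.
have supp' : forall a b : 'I_n, (m <= a)%N -> a != c -> X a b = 0.
  move=> a b hma hac; apply: hsupp; rewrite ltn_neqAle hma andbT.
  by apply: contra hac => /eqP e; apply/eqP/val_inj; rewrite /= e.
case: (ltrgtP (X c c) 0) => [|hpos|h0]; first by rewrite ltNge hcc.
- pose ec : 'cV[R]_n := delta_mx c 0.
  pose G := \matrix_(a, b) (X a c * X b c).
  pose X' := X - (X c c)^-1 *: G.
  have hG : G = (X *m ec) *m (X *m ec)^T.
    apply/matrixP => a b; rewrite !mxE big_ord1 -!colE !mxE.
    by rewrite [X b c]Xsym.
  have hXX : X = X' + (X c c)^-1 *: G by rewrite /X' subrK.
  rewrite hXX mulmxDr mxtraceD -scalemxAr mxtraceZ.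
  apply: addr_ge0.
    apply: IH.
    - apply/matrixP => a b; rewrite !mxE Xsym; by rewrite [X b a]Xsym [X c b * _]mulrC.
    - move=> u; rewrite /qf /X' mulmxBr mulmxBl mxB00 -scalemxAr -scalemxAl mxZ00.
      have e : (u^T *m X *m ec *m (X *m ec)^T *m u) = (u^T *m X *m ec) *m ((X *m ec)^T *m u).
        by rewrite !mulmxA.
      rewrite hG !mulmxA e.
      rewrite mxM00.
      have e2 : ((X *m ec)^T *m u) 0 0 = qf X u ec.
        by rewrite trmx_mul hXs -(qf_sym _ _ hXs) /qf ?mulmxA.
      rewrite e2 -/(qf X u ec) -/(qf X u u).
      have := qf_CS u (ec) hXs hXp; rewrite qf_delta -/(qf X u u).
      move: (qf X u (ec)) (qf X u u) => b q hb.
      rewrite subr_ge0 -expr2 mulrC -/(_ / _) ler_pdivrMr //.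
    - move=> a b; rewrite leq_eqVlt => /orP [/eqP ham | hma].
        have -> : a = c by apply/val_inj; rewrite /= ham.
        rewrite !mxE mulrA mulVf ?mul1r; last exact: lt0r_neq0.
        by rewrite [X b c]Xsym subrr.
      by rewrite !mxE (hsupp a b hma) (hsupp a c hma) mul0r mulr0 subr0.
  apply: mulr_ge0; first by rewrite invr_ge0 ltW.
  rewrite hG mulmxA mxtrace_mulC mulmxA tr11.
  exact: hS.
- have hrow : forall b, X c b = 0.
    move=> b; have := qf_CS (delta_mx c 0) (delta_mx b 0) hXs hXp.
    rewrite !qf_delta h0 mul0r => h; apply/eqP; rewrite -sqrf_eq0 eq_le h sqr_ge0 //.
  apply: IH => // a b hma; case: (eqVneq a c) => [->|hac]; first exact: hrow.
  exact: supp'.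
Qed.

Lemma psd_tr (R : realFieldType) n (S X : 'M[R]_n) : psdq S -> X^T = X -> psdq X ->
  0 <= \tr (S *m X).
Proof. move=> hS hXs hXp; apply: (psd_tr_aux hS (m:=n)) => // a b ha; have := ltn_ord a; lia. Qed.



Lemma trT (R : realType) m n (X : 'M[R]_(m, n)) Y : (X + Y)^T = X^T + Y^T.
Proof. by apply/matrixP => i j; rewrite !mxE. Qed.
Lemma trZ (R : realType) m n a (X : 'M[R]_(m, n)) : (a *: X)^T = a *: X^T.
Proof. by apply/matrixP => i j; rewrite !mxE. Qed.

Lemma innerD (R : realType) m q (U V X : 'M[R]_(m, q)) :
  inner (U + V) X = inner U X + inner V X.
Proof. by rewrite /inner trT mulmxDl mxtraceD. Qed.
Lemma innerZ (R : realType) m q a (U X : 'M[R]_(m, q)) :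
  inner (a *: U) X = a * inner U X.
Proof. by rewrite /inner trZ -scalemxAl mxtraceZ. Qed.
Lemma inner0 (R : realType) m q (X : 'M[R]_(m, q)) : inner 0 X = 0.
Proof. by rewrite /inner trmx0 mul0mx mxtrace0. Qed.

Lemma inner_Aadj (R : realType) m N (A : 'I_m -> 'M[R]_N) nu X :
  inner (Aadj A nu) X = \sum_i nu i 0 * inner (A i) X.
Proof.
rewrite /Aadj; elim/big_rec2: _ => [|i y1 y2 _ IH]; first exact: inner0.
by rewrite innerD innerZ IH.
Qed.

Lemma Aadj_sym (R : realType) m N (A : 'I_m -> 'M[R]_N) nu :
  (forall i, (A i)^T = A i) -> (Aadj A nu)^T = Aadj A nu.
Proof.
move=> hA; apply/matrixP => a b; rewrite mxE /Aadj !summxE; apply: eq_bigr => i _.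
by rewrite !mxE; have := hA i => /matrixP /(_ a b); rewrite mxE => ->.
Qed.

Lemma S_sym (R : realType) m N (A : 'I_m -> 'M[R]_N) C p (Y : 'M[R]_(N, p)) :
  (forall i, (A i)^T = A i) -> C^T = C -> (Smat A C Y)^T = Smat A C Y.
Proof.
move=> hA hC; rewrite /Smat; apply/matrixP => i j.
have := Aadj_sym (mult A C Y) hA => /matrixP /(_ i j); rewrite !mxE => <-.
by have := hC => /matrixP /(_ i j); rewrite !mxE => ->.
Qed.

Lemma keyQ (R : realType) N p (S : 'M[R]_N) (Y : 'M[R]_(N, p)) (u : 'cV[R]_N)
  (z : 'rV[R]_p) (W : 'M[R]_p) :
  S^T = S -> S *m Y = 0 ->
  inner (u *m z + Y *m W) (S *m (u *m z + Y *m W)) = qf S u u * \tr (z^T *m z).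
Proof.
move=> hSs hSY.
rewrite mulmxDr (mulmxA S Y) hSY mul0mx addr0 /inner trT mulmxDl mxtraceD.
have e : Y^T *m S = 0 by rewrite -hSs -trmx_mul hSY trmx0.
have -> : (Y *m W)^T *m (S *m (u *m z)) = 0.
  by rewrite trmx_mul !mulmxA -(mulmxA W^T) e mulmx0 !mul0mx.
rewrite mxtrace0 addr0 trmx_mul.
have -> : z^T *m u^T *m (S *m (u *m z)) = z^T *m (u^T *m S *m u) *m z by rewrite !mulmxA.
by rewrite [u^T *m S *m u]mx11_scalar mul_mx_scalar -scalemxAl mxtraceZ.
Qed.

Lemma keyZ (R : realType) N p (S : 'M[R]_N) (Y : 'M[R]_(N, p)) (u : 'cV[R]_N)
  (z : 'rV[R]_p) (W : 'M[R]_p) :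
  S^T = S -> S *m Y = 0 -> qf S u u < 0 ->
  0 <= inner (u *m z + Y *m W) (S *m (u *m z + Y *m W)) -> z = 0.
Proof.
move=> hSs hSY hneg; rewrite keyQ // => h.
have h0 := trTT_ge0 z.
have : \tr (z^T *m z) <= 0.
  by rewrite -(ler_nM2l hneg) mulr0.
move=> h1; apply: trTT_eq0; apply/eqP; rewrite eq_le h1 h0.
by [].
Qed.

Lemma tang_expr (R : realType) N p (Ai : 'M[R]_N) (Y : 'M[R]_(N, p)) (u : 'cV[R]_N)
  (z : 'rV[R]_p) (W : 'M[R]_p) : Ai^T = Ai ->
  inner (Ai *m Y) (u *m z + Y *m W) =
  (z *m (Y^T *m Ai *m u)) 0 0 + \tr (Y^T *m Ai *m Y *m W).
Proof.
move=> hA; rewrite /inner mulmxDr mxtraceD trmx_mul hA.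
by rewrite !mulmxA mxtrace_mulC tr11 !mulmxA.
Qed.

Lemma S_psd (R : realType) m N (A : 'I_m -> 'M[R]_N) (C : 'M[R]_N) p
  (Y : 'M[R]_(N, p)) (l0 : 'I_m) (c : 'I_N) :
  (forall i, (A i)^T = A i) -> (forall i, A i *m A i = A i) -> A l0 = delta_mx c c ->
  (2 <= p)%N -> (m <= p.+1)%N -> C^T = C ->
  second_order_critical A C Y -> psdq (Smat A C Y).
Proof.
move=> hAs hAi hl0 hp hmp hC [hfeas hSY h2].
have hSs : (Smat A C Y)^T = Smat A C Y by apply: S_sym.
move: hSY h2 hSs; set S := Smat A C Y => hSY h2 hSs.
move=> u; rewrite leNgt; apply/negP => hneg.
pose Nm i := Y^T *m A i *m Y.
have htr : forall i, \tr (Nm i) = 1.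
  move=> i; rewrite -(hfeas i) /inner hAs /Nm -mulmxA mxtrace_mulC -mulmxA.
  by [].
have hNs : forall i, (Nm i)^T = Nm i.
  by move=> i; rewrite /Nm !trmx_mul trmxK hAs mulmxA.
have htang : forall z W i, inner (A i *m Y) (u *m z + Y *m W) =
    (z *m (Y^T *m A i *m u)) 0 0 + \tr (Nm i *m W).
  by move=> z W i; rewrite tang_expr.
have hcontra : forall z W, (forall i, inner (A i *m Y) (u *m z + Y *m W) = 0) -> z = 0.
  move=> z W ht; apply: (keyZ (Y:=Y) (W:=W) hSs hSY hneg); apply: h2 => i; exact: ht i.
case: (boolP [forall i, Nm i == Nm l0]) => [/forallP hall | hex].
- pose y : 'cV[R]_p := Y^T *m delta_mx c 0.
  have [z [hz0 hzy]] := ker_nonzero y hp.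
  apply: (negP hz0); apply/eqP; apply: (hcontra z 0) => i.
  rewrite htang mulmx0 mxtrace0 addr0.
  pose w := A i *m Y *m z^T.
  have hw : w = 0.
    apply: trTT_eq0.
    have -> : w^T *m w = z *m Nm i *m z^T.
      rewrite /w !trmx_mul trmxK hAs !mulmxA -(mulmxA _ (A i) (A i)) hAi /Nm.
      by [].
    rewrite (eqP (hall i)) /Nm hl0 -(mul_delta_mx (0 : 'I_1)).
    have -> : z *m (Y^T *m ((delta_mx c (0 : 'I_1) : 'cV[R]_N) *m delta_mx 0 c) *m Y) *m z^T
        = (z *m y) *m (z *m y)^T.
      by rewrite /y !trmx_mul trmx_delta trmxK !mulmxA.
    by rewrite hzy mul0mx mxtrace0.
  have -> : z *m (Y^T *m A i *m u) = w^T *m u.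
    by rewrite /w !trmx_mul trmxK hAs !mulmxA.
  by rewrite hw trmx0 mul0mx mxE.
- rewrite negb_forall in hex; have /existsP [i0 hi0] := hex.
  pose Lz : 'M[R]_(p, m) := \matrix_(a, j) (Y^T *m A j *m u) a 0.
  pose Nb (b : 'I_2) := if val b == 0%N then Nm i0 else Nm l0.
  pose Lt : 'M[R]_(2, m) := \matrix_(b, j) \tr (Nm j *m Nb b).
  have hlt : (m < p + 2)%N by lia.
  have [x [hx0 hxL]] := ker_nonzero (col_mx Lz Lt) hlt.
  pose z := lsubmx x; pose t := rsubmx x.
  pose W := t 0 0 *: Nm i0 + t 0 1 *: Nm l0.
  have hNW : forall j, \tr (Nm j *m W) = t 0 0 * \tr (Nm j *m Nm i0) + t 0 1 * \tr (Nm j *m Nm l0).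
    by move=> j; rewrite /W mulmxDr -!scalemxAr mxtraceD !mxtraceZ.
  have heq : forall j, (z *m (Y^T *m A j *m u)) 0 0 + \tr (Nm j *m W) = 0.
    move=> j; have := hxL => /matrixP /(_ 0 j).
    rewrite -(hsubmxK x) mul_row_col -/z -/t mxE [in RHS]mxE => <-.
    congr (_ + _).
      by rewrite !mxE; apply: eq_bigr => a _; rewrite !mxE.
    rewrite hNW [RHS]mxE big_ord_recl big_ord1 !mxE /Nb /=. 
    by congr (_ + x 0 _ * _); apply: val_inj.
  have hz : z = 0 by apply: (hcontra z W) => j; rewrite htang heq.
  have hNW0 : forall j, \tr (Nm j *m W) = 0.
    by move=> j; have := heq j; rewrite hz mul0mx mxE add0r.
  have WT : W^T = W by rewrite /W trT !trZ !hNs.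
  have hW0 : W = 0.
    apply: trTT_eq0; rewrite WT {1}/W mulmxDl -!scalemxAl mxtraceD !mxtraceZ.
    by rewrite (hNW0 i0) (hNW0 l0) !mulr0 addr0.
  have htW : t 0 0 + t 0 1 = 0.
    by have := congr1 mxtrace hW0; rewrite /W mxtraceD !mxtraceZ !htr mxtrace0 !mulr1.
  have ht0 : t 0 0 = 0.
    have : t 0 0 *: (Nm i0 - Nm l0) = 0.
      have e1 : t 0 1 = - t 0 0 by lra.
      by rewrite -hW0 /W e1 scalerBr scaleNr.
    by move/eqP; rewrite scaler_eq0 subr_eq0 (negbTE hi0) orbF => /eqP.
  have ht1 : t 0 1 = 0 by lra.
  have ht : t = 0.
    apply/matrixP => a b; rewrite [RHS]mxE (ord1 a).
    case: b => [[|[|b']] hb].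
    - by rewrite -ht0; congr (t 0 _); apply: val_inj.
    - by rewrite -ht1; congr (t 0 _); apply: val_inj.
    - by [].
  apply: (negP hx0); apply/eqP.
  by rewrite -(hsubmxK x) -/z -/t hz ht row_mx0.
Qed.

Lemma sph_sym (R : realType) k (ns : 'I_k -> nat) i : (@spheresA R k ns i)^T = @spheresA R k ns i.
Proof.
apply/matrixP => a b; rewrite !mxE eq_sym.
by case: eqP => // ->.
Qed.

Lemma sph_idem (R : realType) k (ns : 'I_k -> nat) i :
  @spheresA R k ns i *m @spheresA R k ns i = @spheresA R k ns i.
Proof.
apply/matrixP => a b; rewrite mxE (bigD1 a) //= big1 ?addr0.
  rewrite !mxE eqxx /=; case: (in_block _ _) => /=; last by rewrite andbF mul0r.
  by rewrite mul1r.
by move=> d hd; rewrite !mxE eq_sym (negbTE hd) /= mul0r.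
Qed.

Lemma sph_last (R : realType) k (ns : 'I_k -> nat) :
  @spheresA R k ns ord_max = delta_mx ord_max ord_max.
Proof.
apply/matrixP => a b; rewrite !mxE.
have -> : @in_block k ns ord_max a = (a == ord_max).
  rewrite /in_block.
  have -> : [exists l : 'I_k, (val l == val (@ord_max k)) &&
      (@offset k ns l <= a < @offset k ns l + ns l)%N] = false.
    apply/negbTE/existsPn => l; apply/negP => /andP [/eqP hl _].
    by have := ltn_ord l; rewrite hl /= ltnn.
  by rewrite /= eqxx.
case: (eqVneq a b) => [->|hab] /=.
  by case: (b == ord_max).
case: (eqVneq a ord_max) => [ha|] /=; last by []. by move: hab; rewrite ha eq_sym => /negbTE ->.
Qed.

Lemma cost_eq (R : realType) N p (C : 'M[R]_N) (Z : 'M[R]_(N, p)) :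
  inner (C *m Z) Z = inner C (Z *m Z^T).
Proof. by rewrite /inner trmx_mul [in RHS]mulmxA [RHS]mxtrace_mulC mulmxA. Qed.

Lemma gram_feas (R : realType) m N (A : 'I_m -> 'M[R]_N) p (Z : 'M[R]_(N, p)) :
  bm_feasible A Z -> sdp_feasible A (Z *m Z^T).
Proof.
move=> hZ.
have hs : (Z *m Z^T)^T = Z *m Z^T by rewrite trmx_mul trmxK.
split=> //; split=> //; split=> // v.
have -> : v^T *m (Z *m Z^T) *m v = (Z^T *m v)^T *m (Z^T *m v).
  by rewrite trmx_mul trmxK !mulmxA.
rewrite -tr11; exact: trTT_ge0.
Qed.

Theorem corollary7 (R : realType) (k : nat) (ns : 'I_k -> nat) (p : nat)
    (C : 'M[R]_((nsum ns).+1)) :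
  (1 <= k)%N -> (forall i, 2 <= ns i)%N -> C^T = C -> (maxn 2 k <= p)%N ->
  forall Y : 'M[R]_((nsum ns).+1, p),
    second_order_critical (@spheresA R k ns) C Y ->
    bm_optimal (@spheresA R k ns) C Y /\
    sdp_optimal (@spheresA R k ns) C (Y *m Y^T).
Proof.
move=> hk hns hC hp Y hsoc.
have hp2 : (2 <= p)%N by lia.
have hmp : (k.+1 <= p.+1)%N by lia.
have hAs : forall i, (@spheresA R k ns i)^T = @spheresA R k ns i by move=> i; exact: sph_sym.
have hAi : forall i, @spheresA R k ns i *m @spheresA R k ns i = @spheresA R k ns i.
  by move=> i; exact: sph_idem.
have hpsd := S_psd hAs hAi (sph_last R ns) hp2 hmp hC hsoc.
have [hfeas hSY _] := hsoc.
have hSs := S_sym Y hAs hC.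
move: hpsd hSY hSs; set S := Smat _ C Y => hpsd hSY hSs.
have hval : forall X, (forall i, inner (@spheresA R k ns i) X = 1) ->
    inner C X = \tr (S *m X) + \sum_i mult (@spheresA R k ns) C Y i 0.
  move=> X hX.
  have e : C = S + Aadj (@spheresA R k ns) (mult (@spheresA R k ns) C Y).
    by rewrite /S /Smat subrK.
  rewrite {1}e innerD inner_Aadj {1}/inner hSs; congr (_ + _).
  by apply: eq_bigr => i _; rewrite hX mulr1.
have hYf := gram_feas hfeas.
have hsdp : sdp_optimal (@spheresA R k ns) C (Y *m Y^T).
  split=> // X' [hXs [hX' [_ hXp]]].
  rewrite (hval _ hfeas) (hval _ hX') mulmxA hSY mul0mx mxtrace0 add0r lerDr.
  exact: psd_tr.
split=> //; split=> // Z hZ.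
rewrite /bm_cost !cost_eq.
by apply: (proj2 hsdp); apply: gram_feas.
Qed.
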